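(* If a graph $G$ admits a star NeS model, then it admits a star NeS model $(\mathcal{T},(T_v)_{v\in V(G)})$ such that, with $c$ the center of the star $\mathcal{T}$, the set $\{v\in V(G): c\in T_v\}$ is a maximal clique of $G$.
   Context: An embedding tree $\mathcal{T}$ is a tree embedded in the Euclidean plane: each edge is a straight line segment of positive length, segments meet only at common endpoints, and $\mathcal{T}$ is regarded as the set of all points on its segments; $d_{\mathcal{T}}(x,y)$ is the length of the unique path in $\mathcal{T}$ between points $x,y$. A neighborhood subtree of $\mathcal{T}$ with center $c\in\mathcal{T}$ and non-negative rational radius $w$ is $\{p\in\mathcal{T}: d_{\mathcal{T}}(p,c)\le w\}$. A NeS model of a graph $G$ is a pair $(\mathcal{T},(T_v)_{v\in V(G)})$ where each $T_v$ is a neighborhood subtree of $\mathcal{T}$ and for all distinct $u,v$, $uv\in E(G)$ iff $T_u\cap T_v\neq\emptyset$. A star NeS model is a NeS model in which $\mathcal{T}$ is (the embedding of) a star, i.e. a union of line segments $L_1,\dots,L_\beta$ sharing one common endpoint $c$ (the center) and otherwise disjoint. *)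

(* Defs.v *)
From mathcomp Require Import all_boot all_order all_algebra.
From mathcomp Require Import reals.
Set Implicit Arguments. Unset Strict Implicit. Unset Printing Implicit Defensive.
Import Order.TTheory GRing.Theory Num.Theory.
Local Open Scope ring_scope.

(* A point is represented as (i, t) with
   0 <= t <= len i: the point of ray L_i at distance t from the center;
   all points (i, 0) represent the center c. *)
Definition in_star (R : realType) (b : nat) (len : 'I_b -> R) (p : 'I_b * R) : Prop :=
  0 <= p.2 /\ p.2 <= len p.1.

Definition star_dist (R : realType) (b : nat) (p q : 'I_b * R) : R :=
  if p.1 == q.1 then `|p.2 - q.2| else p.2 + q.2.

Definition in_nbhd (R : realType) (b : nat) (len : 'I_b -> R)
    (c : 'I_b * R) (w : rat) (p : 'I_b * R) : Prop :=
  in_star len p /\ star_dist p c <= ratr w.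

Definition star_NeS_model (R : realType) (V : finType) (e : rel V)
    (b : nat) (len : 'I_b -> R) (ctr : V -> 'I_b * R) (rad : V -> rat) : Prop :=
  [/\ (0 < b)%N,
      (forall i, 0 < len i),
      (forall v, in_star len (ctr v)),
      (forall v, 0 <= rad v) &
      (forall u v, u != v ->
         (e u v <-> exists p, in_nbhd len (ctr u) (rad u) p /\
                              in_nbhd len (ctr v) (rad v) p))].

Definition has_star_NeS_model (R : realType) (V : finType) (e : rel V) : Prop :=
  exists b (len : 'I_b -> R) ctr rad, star_NeS_model e len ctr rad.

Definition center_in (R : realType) (b : nat) (len : 'I_b -> R)
    (c : 'I_b * R) (w : rat) : Prop :=
  forall i : 'I_b, in_nbhd len c w (i, 0).

Definition is_clique (V : finType) (e : rel V) (K : V -> Prop) : Prop :=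
  forall u v, K u -> K v -> u != v -> e u v.

Definition is_maximal_clique (V : finType) (e : rel V) (K : V -> Prop) : Prop :=
  is_clique e K /\
  (forall K' : V -> Prop, is_clique e K' -> (forall v, K v -> K' v) ->
     forall v, K' v -> K v).

(* Main.v *)
Require Import Defs.
From mathcomp Require Import all_boot all_order all_algebra.
From mathcomp Require Import reals.
From mathcomp Require Import lra.
Set Implicit Arguments. Unset Strict Implicit. Unset Printing Implicit Defensive.
Import Order.TTheory GRing.Theory Num.Theory.
Local Open Scope ring_scope.

Section S.
Variable R : realType.

Lemma ex_minr (T : finType) (P : pred T) (F : T -> R) x0 :
  P x0 -> exists x, P x /\ forall y, P y -> F x <= F y.
Proof.
move=> Px0; case: (arg_minP F Px0) => x Px Hmin; by exists x.
Qed.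

Lemma ex_gap (T : finType) (P : pred T) (F : T -> R) (c : R) :
  exists d, c < d /\ forall x, P x -> c < F x -> d <= F x.
Proof.
case: (pickP (fun x => P x && (c < F x))) => [x0 Hx0|H0].
  have [x [/andP [Px cx] Hm]] := @ex_minr _ (fun x => P x && (c < F x)) F _ Hx0.
  exists (F x); split => // y Py cy; apply: Hm; by rewrite Py cy.
exists (c + 1); split; first lra.
move=> x Px cx; move: (H0 x); by rewrite Px cx.
Qed.

Lemma rat_between (x y : R) : x < y -> exists q : rat, x < ratr q < y.
Proof.
move=> /rat_in_itvoo [q]; rewrite in_itv /=; by exists q.
Qed.

Variable b : nat.
Variable len : 'I_b -> R.

Lemma nc_nbhd (c : 'I_b * R) w p : ratr w < c.2 -> in_nbhd len c w p ->
  p.1 = c.1 /\ c.2 - ratr w <= p.2 <= c.2 + ratr w /\ 0 <= p.2 <= len p.1.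
Proof.
case: p c => j s [k t] /=; rewrite /in_nbhd /in_star /star_dist /=.
case: eqP => [->|ne] ht [[h1 h2] h3].
  move: h3; rewrite ler_norml => /andP [h3 h4]; split => //; split; apply/andP; split; lra.
lra.
Qed.

Lemma mk_nbhd (c : 'I_b * R) w s : 0 <= s <= len c.1 -> `|s - c.2| <= ratr w ->
  in_nbhd len c w (c.1, s).
Proof.
case: c => k t /= /andP [h1 h2] h3; rewrite /in_nbhd /in_star /star_dist /= eqxx; by [].
Qed.

Lemma conv_nbhd (c : 'I_b * R) w j s s' : 0 <= c.2 -> c.2 <= ratr w ->
  in_nbhd len c w (j, s) -> 0 <= s' <= s -> in_nbhd len c w (j, s').
Proof.
case: c => k t /=; rewrite /in_nbhd /in_star /star_dist /= => h0 h1 [[h2 h3] h4] /andP [h5 h6].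
split; first by split => //=; lra.
move: h4; case: eqP => _; last lra.
rewrite !ler_norml => /andP [h7 h8]; apply/andP; split; lra.
Qed.

Lemma center_inP (c : 'I_b * R) w : (forall i, 0 < len i) -> 0 <= c.2 ->
  center_in len c w <-> c.2 <= ratr w.
Proof.
case: c => k t /= Hl h0; rewrite /center_in /in_nbhd /in_star /star_dist /=; split.
  move=> /(_ k) [_]; by rewrite eqxx sub0r normrN ger0_norm.
move=> h i; split; first by split => //=; exact: ltW.
case: eqP => _; [by rewrite sub0r normrN ger0_norm | by rewrite add0r].
Qed.

Variable V : finType.
Variable e : rel V.
Hypothesis e_sym : symmetric e.

Definition central (ctr : V -> 'I_b * R) (rad : V -> rat) x : bool :=
  (ctr x).2 <= ratr (rad x).
Definition aa (ctr : V -> 'I_b * R) (rad : V -> rat) x : R :=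
  (ctr x).2 - ratr (rad x).
Definition cand ctr rad x : bool :=
  ~~ central ctr rad x && [forall v, central ctr rad v ==> e v x].

Ltac lra' := repeat match goal with
  | H : @eq (ordinal _) _ _ |- _ => clear H
  | H : ~ @eq (ordinal _) _ _ |- _ => clear H
  | H : @eq (prod _ _) _ _ |- _ => clear H
  | H : @eq bool _ _ |- _ => clear H
  end; lra.

Lemma step ctr rad u : star_NeS_model e len ctr rad -> cand ctr rad u ->
  (forall y, cand ctr rad y -> aa ctr rad u <= aa ctr rad y) ->
  exists ctr' rad', star_NeS_model e len ctr' rad' /\ central ctr' rad' u /\
    forall x, x != u -> ctr' x = ctr x /\ rad' x = rad x.
Proof.
move=> [Hb Hlen Hst Hrad Hedge] Hu Hmin.
have /andP [ncu /forallP Hcu] := Hu.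
have Hcu' : forall v, central ctr rad v -> e v u by move=> v; apply/implyP.
have rad0 : forall x, 0 <= (ratr (rad x) : R) by move=> x; rewrite ler0q.
have ncu' : ratr (rad u) < (ctr u).2 by rewrite ltNge.
have [Hst0 Hst1] := Hst u.
have Hmin' : forall y, cand ctr rad y -> (ctr u).2 - ratr (rad u) <= (ctr y).2 - ratr (rad y).
  exact: Hmin.
move: Hst0 Hst1 ncu' Hmin' Hu ncu Hcu Hcu' Hmin; case Eu: (ctr u) => [i t0] /= Hst0 Hst1 ncu' Hmin' Hu ncu Hcu Hcu' Hmin.
have w0ge := rad0 u.
have ncu0 : ratr (rad u) < (ctr u).2 by rewrite Eu.
pose b0 := Num.min (t0 + ratr (rad u)) (len i).
have b0a : b0 <= t0 + ratr (rad u) by rewrite ge_min lexx.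
have b0b : b0 <= len i by rewrite ge_min lexx orbT.
have b0c : t0 <= b0 by rewrite le_min Hst1 andbT; lra'.
have b0d : forall s, s <= t0 + ratr (rad u) -> s <= len i -> s <= b0.
  by move=> s h1 h2; rewrite le_min h1 h2.
move: b0 b0a b0b b0c b0d => b0 b0a b0b b0c b0d.
have ncpos : forall x, ~~ central ctr rad x -> 0 < aa ctr rad x.
  by move=> x; rewrite /central /aa -ltNge subr_gt0.
have [d0 [d0p Hd0]] := ex_gap (fun x => ~~ central ctr rad x) (aa ctr rad) 0.
have [m [mb Hm0]] := ex_gap (fun x => ~~ central ctr rad x) (aa ctr rad) b0.
pose mm := Num.min d0 (m - b0).
have mm1 : mm <= d0 by rewrite ge_min lexx.
have mm2 : mm <= m - b0 by rewrite ge_min lexx orbT.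
have mm3 : 0 < mm by rewrite lt_min d0p subr_gt0.
move: mm mm1 mm2 mm3 => mm mm1 mm2 mm3.
have [q /andP [q1 q2]] := @rat_between (b0 / 2) (b0 / 2 + mm / 2) ltac:(lra').
have Hsub : forall p, in_nbhd len (ctr u) (rad u) p -> in_nbhd len (i, b0 / 2) q p.
  move=> [j s] /(nc_nbhd ncu0) /= [-> [/andP [h1 h2] /andP [h3 h4]]].
  rewrite Eu /= in h1 h2 h4 *.
  have hs : s <= b0 by apply: b0d.
  apply: (@mk_nbhd (i, b0 / 2)) => /=; first by rewrite h3.
  rewrite ler_norml; apply/andP; split; lra'.
have Hback : forall y p, y != u -> in_nbhd len (i, b0 / 2) q p ->
    in_nbhd len (ctr y) (rad y) p -> e u y.
  move=> y p yu Hp Hyp.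
  case cy: (central ctr rad y); first by rewrite e_sym; apply: Hcu'.
  have ncy : ~~ central ctr rad y by rewrite cy.
  have ay0 := ncpos y ncy.
  have ncy' : ratr (rad y) < (ctr y).2 by rewrite ltNge.
  have [Ep [/andP [h1 h2] /andP [h3 h4]]] := nc_nbhd ncy' Hyp.
  have wy0 := rad0 y.
  move: Hp; case: p Ep h1 h2 h3 h4 {Hyp} => j s /= Ep h1 h2 h3 h4.
  rewrite /in_nbhd /star_dist /= => -[_].
  case: eqP => [ji|nji]; last first.
    have := Hd0 y ncy ay0; rewrite /aa => h5 h6; exfalso; move: h1 h3 h5 h6 mm1 mm3 q2 d0p; clear; move=> h1 h3 h5 h6 mm1 mm3 q2 d0p; lra.
  rewrite ler_norml => /andP [h5 h6].
  have ayb : aa ctr rad y <= b0.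
    rewrite leNgt; apply/negP => h7; have := Hm0 y ncy h7; rewrite /aa => h8; lra'.
  have Hby : t0 - ratr (rad u) <= (ctr y).2 + ratr (rad y).
    rewrite leNgt; apply/negP => h7.
    suff /Hmin' : cand ctr rad y by lra'.
    rewrite /cand ncy /=; apply/forallP => v; apply/implyP => cv.
    have vu : v != u by apply/eqP => vu; move: cv ncu; rewrite vu => ->.
    have vy : v != y by apply/eqP => vy; move: cv; rewrite vy cy.
    have [[j' s'] [Hv' Hu']] := (Hedge v u vu).1 (Hcu' v cv).
    have [Ej' [/andP [h8 h9] _]] := nc_nbhd ncu0 Hu'.
    rewrite Eu /= in Ej' h8.
    apply/(Hedge v y vy); exists ((ctr y).1, aa ctr rad y); split.
      rewrite -Ep ji -Ej'; apply: (conv_nbhd _ cv Hv'); first by case: (Hst v).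
      by rewrite /aa in ay0 *; apply/andP; split; lra'.
    apply: mk_nbhd; last by rewrite /aa ler_norml; apply/andP; split; lra'.
    rewrite -Ep; rewrite /aa in ay0 *; apply/andP; split; lra'.
  have uy : u != y by rewrite eq_sym.
  apply/(Hedge u y uy).
  have Ey1 : (ctr y).1 = i by rewrite -Ep.
  rewrite /aa in ay0 ayb.
  have Hst' := Hst y; case: Hst' => hy1 hy2; rewrite Ey1 in hy2.
  case: (lerP (t0 - ratr (rad u)) ((ctr y).2 - ratr (rad y))) => hc2.
    exists (i, (ctr y).2 - ratr (rad y)); split.
      rewrite Eu; apply: (@mk_nbhd (i, t0)); first by rewrite /=; apply/andP; split; lra'.
      rewrite /= ler_norml; apply/andP; split; lra'.
    rewrite -Ey1; apply: mk_nbhd; first by rewrite Ey1; apply/andP; split; lra'.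
    rewrite /= ler_norml; apply/andP; split; lra'.
  exists (i, t0 - ratr (rad u)); split.
    rewrite Eu; apply: (@mk_nbhd (i, t0)); first by rewrite /=; apply/andP; split; lra'.
    rewrite /= ler_norml; apply/andP; split; lra'.
  rewrite -Ey1; apply: mk_nbhd; first by rewrite Ey1; apply/andP; split; lra'.
  rewrite /= ler_norml; apply/andP; split; lra'.
have b0p : 0 <= b0 / 2 by lra'.
have b0l : b0 / 2 <= len i by lra'.
have q0' : (0:R) <= ratr q by lra'.
have q0 : (0 <= q)%R by rewrite ler0q in q0'.
exists (fun x => if x == u then (i, b0 / 2) else ctr x).
exists (fun x => if x == u then q else rad x).
split; last split.
- split => //.
  + by move=> x; case: eqP => _ //; split.
  + by move=> x; case: eqP => _.
  + move=> x y xy.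
    case: (eqVneq x u) => [Ex|xu]; case: (eqVneq y u) => [Ey|yu].
    * by move: xy; rewrite Ex Ey eqxx.
    * rewrite Ex; split.
        by move=> /(Hedge u y ltac:(by rewrite eq_sym)) [p [Hp1 Hp2]]; exists p; split => //; apply: Hsub.
      by move=> [p [Hp1 Hp2]]; apply: (Hback y p).
    * rewrite Ey e_sym; split.
        by move=> /(Hedge u x ltac:(by rewrite eq_sym)) [p [Hp1 Hp2]]; exists p; split => //; apply: Hsub.
      by move=> [p [Hp1 Hp2]]; apply: (Hback x p).
    * exact: Hedge.
- by rewrite /central eqxx /=; lra'.
- by move=> x /negPf ->.
Qed.

Lemma final ctr rad : star_NeS_model e len ctr rad -> (forall x, ~~ cand ctr rad x) ->
  is_maximal_clique e (fun v => center_in len (ctr v) (rad v)).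
Proof.
move=> [Hb Hlen Hst Hrad Hedge] Hno.
have Hc : forall v, center_in len (ctr v) (rad v) <-> central ctr rad v.
  by move=> v; apply: center_inP => //; case: (Hst v).
split.
  move=> u v Hu Hv uv; apply/(Hedge u v uv); exists ((ctr u).1, 0); split; [exact: Hu|exact: Hv].
move=> K' HK' Hsub v Kv; apply/Hc.
case cv: (central ctr rad v) => //; exfalso.
move: (Hno v); rewrite /cand cv /= => /negP; apply.
apply/forallP => w; apply/implyP => cw.
have wv : w != v by apply/eqP => wv; move: cw; rewrite wv cv.
apply: HK' => //; apply: Hsub; exact/Hc.
Qed.

Lemma main_ind n : forall ctr rad, star_NeS_model e len ctr rad ->
  (#|[pred x | ~~ central ctr rad x]| <= n)%N ->
  exists ctr' rad', star_NeS_model e len ctr' rad' /\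
    is_maximal_clique e (fun v => center_in len (ctr' v) (rad' v)).
Proof.
elim: n => [|n IH] ctr rad Hm Hcnt.
  exists ctr, rad; split => //; apply: final => // x; apply/negP => Hx.
  move: Hcnt; rewrite leqn0 => /eqP/card0_eq/(_ x); rewrite inE.
  by move: Hx => /andP [-> _].
case: (pickP (cand ctr rad)) => [u0 Hu0|Hno]; last first.
  exists ctr, rad; split => //; apply: final => // x; by rewrite Hno.
have [u [Hu Hmin]] := ex_minr (aa ctr rad) Hu0.
have [ctr' [rad' [Hm' [Hcu Hsame]]]] := step Hm Hu Hmin.
apply: (IH ctr' rad' Hm').
have Hnc : u \in [pred x | ~~ central ctr rad x] by rewrite inE; case/andP: Hu.
move: Hcnt; rewrite (cardD1 u) Hnc add1n ltnS; apply: leq_trans.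
apply: subset_leq_card; apply/subsetP => x; rewrite !inE.
case: (eqVneq x u) => [->|xu]; first by rewrite Hcu.
by rewrite /central; have [-> ->] := Hsame x xu.
Qed.
End S.

Unset Implicit Arguments.
Local Close Scope ring_scope.

Theorem claim1 (R : realType) (V : finType) (e : rel V)
  (e_sym : symmetric e) (e_irr : irreflexive e) :
  has_star_NeS_model R e ->
  exists (b : nat) (len : 'I_b -> R) (ctr : V -> 'I_b * R) (rad : V -> rat),
    star_NeS_model e len ctr rad /\
    is_maximal_clique e (fun v => center_in len (ctr v) (rad v)).
Proof.
move=> [b [len [ctr [rad Hm]]]].
have [ctr' [rad' [Hm' Hmax]]] := main_ind e_sym Hm (leqnn _).
by exists b, len, ctr', rad'.
Qed.
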